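(* Suppose $(\varepsilon,\beta,\gamma;(12))\in\mathrm{Par}(n)$. Fix a positive integer $d$, and let $r$ be the number of cycles of $\beta$ of length $d$. Let $f$ be the number of fixed points of $\gamma$. If $r>0$, then: <ul> <li>(i) $f\le (r-1)d$ if $d$ is even;</li> <li>(ii) $f\le (r-1)d+1$ if $d$ is odd.</li> </ul>
   Context: A Latin square of order $n$ is an $n\times n$ array with rows, columns and symbols indexed by $[n]$, each symbol occurring once in each row and each column, with triple set $O(L)$. Permutations act on the right; $\varepsilon$ is the identity; fixed points count as cycles of length $1$. A paratopism $(\alpha,\beta,\gamma;(12))$ maps $L$ to $L^\sigma$ with triple set $\{(y\beta,x\alpha,z\gamma):(x,y,z)\in O(L)\}$; it is an autoparatopism of $L$ if $L^\sigma=L$. $\mathrm{Par}(n)$ is the set of paratopisms that are autoparatopisms of at least one Latin square of order $n$. *)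

(* Defs.v *)
From mathcomp Require Import all_boot all_fingroup.
Set Implicit Arguments. Unset Strict Implicit. Unset Printing Implicit Defensive.

(* A Latin square of order n: rows, columns, symbols indexed by 'I_n;
   L x y is the symbol in row x, column y. *)
Definition latin_square (n : nat) (L : 'I_n -> 'I_n -> 'I_n) : Prop :=
  (forall x : 'I_n, injective (fun y => L x y)) /\
  (forall y : 'I_n, injective (fun x => L x y)).

(* Triple set O(L), a triple (x,y,z) encoded as ((x,y),z). *)
Definition triples (n : nat) (L : 'I_n -> 'I_n -> 'I_n)
  : {set 'I_n * 'I_n * 'I_n} :=
  [set t | t.2 == L t.1.1 t.1.2].

(* Triple set of L^sigma for sigma = (alpha, beta, gamma; (12)):
   { (y beta, x alpha, z gamma) : (x,y,z) in O(L) }  (right action = application). *)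
Definition para12_image (n : nat) (a b c : {perm 'I_n}) (L : 'I_n -> 'I_n -> 'I_n)
  : {set 'I_n * 'I_n * 'I_n} :=
  [set ((b t.1.2, a t.1.1), c t.2) | t in triples L].

Definition autoparatopism12 (n : nat) (a b c : {perm 'I_n}) (L : 'I_n -> 'I_n -> 'I_n) : Prop :=
  para12_image a b c L = triples L.

Definition in_Par12 (n : nat) (a b c : {perm 'I_n}) : Prop :=
  exists L : 'I_n -> 'I_n -> 'I_n, latin_square L /\ autoparatopism12 a b c L.

(* number of cycles (fixed points included) of s of length d *)
Definition num_cycles_len (n : nat) (s : {perm 'I_n}) (d : nat) : nat :=
  #|[set C in porbits s | #|C| == d]|.

Definition num_fixed (n : nat) (s : {perm 'I_n}) : nat :=
  #|[set x : 'I_n | s x == x]|.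

(* Main.v *)
Require Import Defs.
From mathcomp Require Import all_boot all_fingroup.
From mathcomp Require Import zify.
Set Implicit Arguments. Unset Strict Implicit. Unset Printing Implicit Defensive.

Lemma permX_fix (T : finType) (s : {perm T}) x q : ((s ^+ (q * #|porbit s x|))%g) x = x.
Proof.
have H : ((s ^+ #|porbit s x|)%g) x = x by rewrite permX iter_porbit.
elim: q => [|q IH]; first by rewrite mul0n expg0 perm1.
by rewrite mulSn expgD permM H IH.
Qed.

Lemma permX_mod (T : finType) (s : {perm T}) x k :
  ((s ^+ k)%g) x = ((s ^+ (k %% #|porbit s x|))%g) x.
Proof. by rewrite {1}(divn_eq k #|porbit s x|) expgD permM permX_fix. Qed.

Lemma permX_inj (T : finType) (s : {perm T}) x k l : k < #|porbit s x| ->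
  l < #|porbit s x| -> ((s ^+ k)%g) x = ((s ^+ l)%g) x -> k = l.
Proof.
move=> hk hl; rewrite !permX => e.
have U := uniq_traject_porbit s x.
by apply/eqP; rewrite -(nth_uniq x _ _ U) ?size_traject // !nth_traject // e.
Qed.

Lemma permX_eq (T : finType) (s : {perm T}) x k l :
  ((s ^+ k)%g) x = ((s ^+ l)%g) x -> k %% #|porbit s x| = l %% #|porbit s x|.
Proof.
rewrite (permX_mod s x k) (permX_mod s x l) => e; apply: permX_inj e;
by rewrite ltn_mod lt0n card_porbit_neq0.
Qed.

Lemma porbits_partition (T : finType) (s : {perm T}) d :
  partition [set C in porbits s | #|C| == d] [set x | #|porbit s x| == d].
Proof.
apply/and3P; split.
- apply/eqP/setP => x; rewrite inE; apply/bigcupP/idP.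
  + move=> [C]; rewrite inE => /andP[/imsetP[u _ ->] /eqP <-] xu.
    have e : porbit s x = porbit s u by apply/eqP; rewrite eq_porbit_mem.
    by rewrite e.
  + move=> hx; exists (porbit s x); last exact: porbit_id.
    by rewrite inE hx imset_f.
- apply/trivIsetP => A B; rewrite !inE => /andP[/imsetP[u _ ->] _]
    /andP[/imsetP[v _ ->] _] ne.
  apply/pred0P => w /=; apply/negbTE/negP => /andP[wu wv].
  move: ne; rewrite -eq_porbit_mem in wu; rewrite -eq_porbit_mem in wv.
  by rewrite -(eqP wu) -(eqP wv) eqxx.
- apply/negP; rewrite inE => /andP[/imsetP[u _ e] _].
  by have := porbit_id s u; rewrite -e inE.
Qed.
Theorem theorem4p4 (n : nat) (b c : {perm 'I_n}) (d : nat) :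
  0 < d ->
  in_Par12 1%g b c ->
  0 < num_cycles_len b d ->
  (~~ odd d -> num_fixed c <= (num_cycles_len b d - 1) * d) /\
  (odd d -> num_fixed c <= (num_cycles_len b d - 1) * d + 1).
Proof.
move=> d0 [L [[Hr Hc] Hpar]] hr.
have key : forall x y, L (b y) x = c (L x y).
  move=> x y.
  have : ((b y, (1%g : {perm 'I_n}) x), c (L x y)) \in para12_image 1 b c L.
    by apply/imsetP; exists ((x, y), L x y); rewrite // inE.
  by rewrite Hpar inE perm1 => /eqP /= ->.
have [C] : exists C, C \in [set C in porbits b | #|C| == d].
  by apply/set0Pn; rewrite -card_gt0.
rewrite inE => /andP[/imsetP[y _ ->] /eqP Yd].
pose tau z u := invF (Hc u) z.
have tauL : forall z u, L (tau z u) u = z by move=> z u; rewrite /tau (f_invF (Hc u) z).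
have tauI : forall z w u, tau z u = tau w u -> z = w.
  by move=> z w u e; rewrite -(tauL z u) -(tauL w u) e.
pose F := [set z | c z == z].
have tau2 : forall z u, z \in F -> tau z (tau z u) = b u.
  move=> z u; rewrite inE => /eqP hz.
  have e := key (tau z u) u; rewrite tauL hz in e.
  by rewrite /tau -[X in invF _ X]e invF_f.
have tau_comm : forall z u, z \in F -> tau z (b u) = b (tau z u).
  by move=> z u hz; rewrite -{1}(tau2 z u hz) tau2.
have tau_X : forall z i u, z \in F -> tau z ((b ^+ i)%g u) = (b ^+ i)%g (tau z u).
  move=> z i u hz; elim: i => [|i IH]; first by rewrite expg0 !perm1.
  by rewrite expgSr !permM tau_comm // IH.
have tau_inj : forall z, z \in F -> injective (tau z).
  move=> z hz u v e; have : b u = b v by rewrite -(tau2 z u hz) -(tau2 z v hz) e.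
  exact: perm_inj.
have tau_orb : forall z u, z \in F -> #|porbit b (tau z u)| = #|porbit b u|.
  move=> z u hz.
  have -> : porbit b (tau z u) = tau z @: porbit b u.
    apply/setP => v; apply/porbitP/imsetP.
    - by move=> [i ->]; exists ((b ^+ i)%g u); rewrite ?mem_porbit ?tau_X.
    - by move=> [w /porbitP [i ->] ->]; exists i; rewrite tau_X.
  by rewrite card_imset //; apply: tau_inj.
pose X := [set x | #|porbit b x| == d].
have cardX : #|X| = num_cycles_len b d * d.
  apply: card_uniform_partition (porbits_partition b d).
  by move=> A; rewrite inE => /andP[_ /eqP].
pose Y := porbit b y.
have YX : Y \subset X.
  apply/subsetP => x xY; rewrite inE.
  have e : porbit b x = porbit b y by apply/eqP; rewrite eq_porbit_mem.
  by rewrite e Yd.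
pose B := [set z | tau z y \in Y].
have F1 : #|F :\: B| <= (num_cycles_len b d - 1) * d.
  have -> : (num_cycles_len b d - 1) * d = #|X :\: Y|.
    by rewrite cardsD (setIidPr YX) cardX /Y Yd mulnBl mul1n.
  rewrite -(@card_in_imset _ _ (fun z => tau z y)); last first.
    by move=> z w _ _; apply: tauI.
  apply: subset_leq_card; apply/subsetP => x /imsetP[z]; rewrite !inE.
  move=> /andP[zB zF] ->; rewrite zB /=.
  by rewrite tau_orb ?inE // Yd.
have F2 : forall z, z \in F :&: B -> exists j, tau z y = (b ^+ j)%g y /\
    (j + j) %% d = 1 %% d.
  move=> z; rewrite !inE => /andP[zF /porbitP [j ej]]; exists j; split => //.
  rewrite -Yd; apply: permX_eq.
  by rewrite expgD permM expg1 -ej -tau_X ?inE // -ej tau2 // inE.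
have -> : num_fixed c = #|F :&: B| + #|F :\: B| by rewrite cardsID.
split.
- move=> ev.
  suff -> : #|F :&: B| = 0 by rewrite add0n.
  apply/eqP; rewrite cards_eq0; apply/eqP/setP => z; rewrite in_set0.
  apply/negbTE/negP => /F2 [j [_ e]].
  have d2 : 1 < d by move: d0 ev; case: (d) => [|[|]].
  have := odd_mod (j + j) (negbTE ev); rewrite e modn_small // addnn odd_double //.
- move=> od.
  rewrite addnC; apply: leq_add F1 _.
  apply/card_le1_eqP => z w /F2 [j [ej e1]] /F2 [k [ek e2]].
  have hd := odd_double_half d; rewrite od /= in hd.
  have E : forall m, m %% d = ((m + m) %% d * (d./2).+1) %% d.
    move=> m; rewrite modnMml (_ : (m + m) * (d./2).+1 = m * d + m) ?modnMDl //.
    rewrite -{2}hd; lia.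
  have jk : j %% d = k %% d by rewrite (E j) (E k) e1 e2.
  apply: (tauI _ _ y); rewrite ej ek (permX_mod b y j) (permX_mod b y k) /= -/Y Yd.
  by rewrite jk.
Qed.
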